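(* (1) For $2\le j\le d$, $m\in\mathbb Z$ and $n\in\mathbb Z_{\ge0}$, $v^{1j}(m,n)M_r^{(1)}=\{0\}$. (2) For $2\le i\le j\le d$ and $m,n\in\mathbb Z$ such that $v^{ij}(m,n)\in\mathcal B_+$, $v^{ij}(m,n)M_r^{(1)}=\{0\}$.
   Context: Fix an integer $d\ge 2$ and $r\in\mathbb{C}$. Let $\hat{\mathfrak h}$ be the complex Lie algebra with basis $\{v^i(m)\mid 1\le i\le d,\ m\in\mathbb{Z}\}\cup\{\mathbf c\}$ and bracket $[v^i(m),v^j(n)]=\delta_{m+n,0}\delta_{i,j}\,m\,\mathbf c$, $[\mathbf c,\hat{\mathfrak h}]=0$. In $A=U(\hat{\mathfrak h})/\langle \mathbf c-1\rangle$ let $v^{ij}(m,n)$ be the image of $v^i(m)v^j(n)$; then $v^{ij}(m,n)=v^{ji}(n,m)$ unless $i=j$ and $m=-n$, and $v^{ii}(m,-m)=v^{ii}(-m,m)+m$. Let $\mathcal B=\{v^{ii}(m,n)\mid 1\le i\le d,\ m\le n\}\cup\{v^{ij}(m,n)\mid 1\le i<j\le d,\ m,n\in\mathbb Z\}$; then $\mathcal B\cup\{1\}$ is linearly independent, $\mathcal L:=\mathrm{span}_{\mathbb C}\mathcal B\oplus\mathbb C\subset A$ contains every $v^{ij}(m,n)$ and is closed under $[x,y]=xy-yx$. With $\pi_1,\pi_2$ the projections of $\mathcal L$ onto $\mathrm{span}\,\mathcal B$ and onto $\mathbb C$, $[x,y]_r=\pi_1([x,y])+r\pi_2([x,y])$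 is a Lie bracket on $\mathcal L$; call this Lie algebra $\mathcal L_r$. Let $\mathcal B_+=\{v^{ij}(m,n)\in\mathcal B\mid m\ge 0\text{ or }n\ge 0\}$, $\mathcal L_r^+=\mathrm{span}\,\mathcal B_+\oplus\mathbb C$, and $M_r=U(\mathcal L_r)\otimes_{U(\mathcal L_r^+)}\mathbb C\mathbf 1$, where $\mathcal B_+$ acts by $0$ on $\mathbf 1$ and $s\in\mathbb C\subset\mathcal L_r$ acts by the scalar $s$. Let $\mathcal L_r^{(1)}$ be the Lie subalgebra of $\mathcal L_r$ generated by $\{v^{11}(m,n)\mid m,n\in\mathbb Z,\ m\le n\}$ and $M_r^{(1)}=U(\mathcal L_r^{(1)})\mathbf 1\subset M_r$. *)

(* Defs.v *)
From HB Require Import structures.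
From mathcomp Require Import all_boot all_order all_algebra.
From mathcomp Require Import Rstruct complex.
From mathcomp Require Import finmap monalg.

Set Implicit Arguments.
Unset Strict Implicit.
Unset Printing Implicit Defensive.

Import Order.TTheory GRing.Theory Num.Theory.
Local Open Scope ring_scope.

Definition CC : fieldType := (Rdefinitions.R)[i].

(* Basis of the Lie algebra L.                                          *)
(*   Some (i, j, m, n)  stands for v^{ij}(m,n)                           *)
(*   None               stands for the central element 1 in C \subset L *)
(* Only the tuples satisfying [validB d] are elements of the basis      *)
(* \mathcal B \cup {1}; other tuples are never used.                   *)
Definition Bas : Type := option (nat * nat * int * int).

Definition validB (d : nat) (b : Bas) : bool :=
  match b with
  | None => true
  | Some (i, j, m, n) =>
      [&& (1 <= i)%N, (i <= j)%N, (j <= d)%N & ((i < j)%N || (m <= n))]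
  end.

Definition inBplus (d : nat) (b : Bas) : bool :=
  match b with
  | None => false
  | Some (i, j, m, n) => validB d b && ((0 <= m) || (0 <= n))
  end.

(* The Lie algebra L (as a vector space): free vector space on Bas;    *)
(* its relevant part is the span of the valid basis vectors.            *)
Definition LL := {malg CC[Bas]}.

Definition eB (b : Bas) : LL := << 1 *g b >>.

(* The element v^{ij}(m,n) of A, written in the basis B \cup {1} of L,  *)
(* using v^{ij}(m,n) = v^{ji}(n,m) unless i = j and m = -n, and          *)
(* v^{ii}(m,-m) = v^{ii}(-m,m) + m.                                     *)
Definition vq (i j : nat) (m n : int) : LL :=
  if (i < j)%N then eB (Some (i, j, m, n))
  else if (j < i)%N then eB (Some (j, i, n, m))
  else if m <= n then eB (Some (i, i, m, n))
  else eB (Some (i, i, n, m)) + (if m + n == 0 then m%:~R else 0) *: eB None.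

Definition delta (b : bool) (k : int) : CC := if b then k%:~R else 0.

(* The commutator [x, y] = xy - yx computed in A, for basis elements, *)
(* expressed in the basis B \cup {1}:                                  *)
(* [v^i(a)v^j(b), v^k(c)v^l(e)] = [v^j(b),v^k(c)] v^i(a)v^l(e)         *)
(*   + [v^i(a),v^k(c)] v^j(b)v^l(e) + [v^j(b),v^l(e)] v^k(c)v^i(a)     *)
(*   + [v^i(a),v^l(e)] v^k(c)v^j(b),                                   *)
(* with [v^p(s), v^q(t)] = delta_{pq} delta_{s+t,0} s.  The central    *)
(* element None brackets to 0 with everything.                         *)
Definition brA (p q : Bas) : LL :=
  match p, q with
  | Some (i, j, a, b), Some (k, l, c, e) =>
      delta ((j == k) && (b + c == 0)) b *: vq i l a e
    + delta ((i == k) && (a + c == 0)) a *: vq j l b e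
    + delta ((j == l) && (b + e == 0)) b *: vq k i c a
    + delta ((i == l) && (a + e == 0)) a *: vq k j c b
  | _, _ => 0
  end.

(* x |-> pi_1(x) + r pi_2(x) *)
Definition rscale (r : CC) (x : LL) : LL := x + ((r - 1) * x@_None) *: eB None.

Definition brr (r : CC) (x y : LL) : LL :=
  \sum_(p <- msupp x) \sum_(q <- msupp y)
     (x@_p * y@_q) *: rscale r (brA p q).

(* Tensor algebra T(L) (basis: words over Bas), and the induced module *)
(* M_r = U(L_r) (x)_{U(L_r^+)} C1 realised as the quotient of T(L) by  *)
(* the subspace N = J + T(L) . {b, 1_L - 1 : b in B_+}, where J is the  *)
(* two-sided ideal defining U(L_r).  The vector 1 of M_r is the class  *)
(* of the empty word, and x in L_r acts by left multiplication.        *)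
Definition TT := {malg CC[seq Bas]}.

Definition eW (w : seq Bas) : TT := << 1 *g w >>.

Definition lmul (x : LL) (t : TT) : TT :=
  \sum_(p <- msupp x) \sum_(w <- msupp t) (x@_p * t@_w) *: eW (p :: w).

Definition ins (u : seq Bas) (z : LL) (w : seq Bas) : TT :=
  \sum_(p <- msupp z) z@_p *: eW (u ++ p :: w).

Inductive inN (d : nat) (r : CC) : TT -> Prop :=
| inN0 : inN d r 0
| inNadd s t : inN d r s -> inN d r t -> inN d r (s + t)
| inNscale (c : CC) t : inN d r t -> inN d r (c *: t)
| inNrel (u w : seq Bas) (x y : Bas) :
    all (validB d) u -> all (validB d) w -> validB d x -> validB d y ->
    inN d r (eW (u ++ x :: y :: w) - eW (u ++ y :: x :: w)
             - ins u (brr r (eB x) (eB y)) w)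
| inNplus (u : seq Bas) (b : Bas) :
    all (validB d) u -> inBplus d b -> inN d r (eW (rcons u b))
| inNone (u : seq Bas) :
    all (validB d) u -> inN d r (eW (rcons u None) - eW u).

Definition zeroM (d : nat) (r : CC) (t : TT) : Prop := inN d r t.

Inductive inL1 (r : CC) : LL -> Prop :=
| inL1gen (m n : int) : m <= n -> inL1 r (eB (Some (1%N, 1%N, m, n)))
| inL10 : inL1 r 0
| inL1add x y : inL1 r x -> inL1 r y -> inL1 r (x + y)
| inL1scale (c : CC) x : inL1 r x -> inL1 r (c *: x)
| inL1br x y : inL1 r x -> inL1 r y -> inL1 r (brr r x y).

(* representatives in T(L) of M_r^{(1)} = U(L_r^{(1)}) 1 *)
Inductive inM1 (r : CC) : TT -> Prop :=
| inM1one : inM1 r (eW [::])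
| inM1act x t : inL1 r x -> inM1 r t -> inM1 r (lmul x t)
| inM1add s t : inM1 r s -> inM1 r t -> inM1 r (s + t)
| inM1scale (c : CC) t : inM1 r t -> inM1 r (c *: t).

(* Main.v *)
Require Import Defs.
From HB Require Import structures.
From mathcomp Require Import all_boot all_order all_algebra.
From mathcomp Require Import Rstruct complex.
From mathcomp Require Import finmap monalg.
Import Order.TTheory GRing.Theory Num.Theory.
Local Open Scope ring_scope.

Module GenM.
Local Open Scope fset_scope.
Local Open Scope ring_scope.
Set Implicit Arguments.
Unset Strict Implicit.

Section Gen.
Context {K : choiceType} {V : lmodType CC}.

Definition lext (F : K -> V) (g : {malg CC[K]}) : V :=
  \sum_(k <- msupp g) g@_k *: F k.

Lemma lextEw (F : K -> V) g (dom : {fset K}) : msupp g `<=` dom ->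
  lext F g = \sum_(k <- dom) g@_k *: F k.
Proof.
move=> le; rewrite /lext (big_fset_incl _ le) => //= x xd /mcoeff_outdom ->.
by rewrite scale0r.
Qed.

Lemma lext_lin (F : K -> V) a g h :
  lext F (a *: g + h) = a *: lext F g + lext F h.
Proof.
have le1 : msupp (a *: g + h) `<=` msupp g `|` msupp h.
  apply: fsubset_trans (msuppD_le _ _) _.
  by apply: fsetSU; apply: msuppZ_le.
rewrite (lextEw _ le1) (lextEw _ (fsubsetUl (msupp g) (msupp h))) (lextEw _ (fsubsetUr (msupp g) (msupp h))).
rewrite scaler_sumr -big_split /=; apply: eq_bigr => k _.
by rewrite mcoeffD mcoeffZ scalerDl scalerA.
Qed.

Lemma lextU (F : K -> V) k : lext F << 1 *g k >> = F k.
Proof. by rewrite (lextEw _ msuppU_le) big_seq_fset1 mcoeffUU scale1r. Qed.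

Lemma eq_lext (F F' : K -> V) g : F =1 F' -> lext F g = lext F' g.
Proof. by move=> e; apply: eq_bigr => k _; rewrite e. Qed.

Lemma lext_pt (F1 F2 : K -> V) a g :
  lext (fun k => a *: F1 k + F2 k) g = a *: lext F1 g + lext F2 g.
Proof.
rewrite /lext scaler_sumr -big_split /=; apply: eq_bigr => k _.
by rewrite scalerDr !scalerA mulrC.
Qed.
End Gen.

Definition islin {U W : lmodType CC} (f : U -> W) :=
  forall a u v, f (a *: u + v) = a *: f u + f v.

Section Lin.
Context {U W X : lmodType CC}.
Lemma lin0 (f : U -> W) : islin f -> f 0 = 0.
Proof.
move=> h; have := h (-1) 0 0; rewrite scaler0 addr0 => ->.
by rewrite scaleN1r addNr.
Qed.
Lemma linD (f : U -> W) u v : islin f -> f (u + v) = f u + f v.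
Proof. by move=> h; rewrite -{1}[u]scale1r h scale1r. Qed.
Lemma linZ (f : U -> W) a u : islin f -> f (a *: u) = a *: f u.
Proof. by move=> h; rewrite -[a *: u]addr0 h lin0 // addr0. Qed.
Lemma lin_sub (f g : U -> W) : islin f -> islin g -> islin (fun x => f x - g x).
Proof.
move=> hf hg a u v; rewrite hf hg scalerBr opprD addrACA //.
Qed.
Lemma lin_comp (f : U -> W) (g : W -> X) : islin f -> islin g -> islin (fun x => g (f x)).
Proof. by move=> hf hg a u v; rewrite hf hg. Qed.
End Lin.

Section Gen2.
Context {K : choiceType} {V W : lmodType CC}.
Lemma lext_comm (F : K -> V) (f : V -> W) g : islin f ->
  f (lext F g) = lext (fun k => f (F k)) g.
Proof.
move=> h; rewrite /lext; elim: (msupp g : seq K) => [|k s IH].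
  by rewrite !big_nil lin0.
by rewrite !big_cons h IH.
Qed.

Lemma eU_scale (c : CC) (k : K) : << c *g k >> = c *: << 1 *g k >>.
Proof.
apply/malgP => k'; rewrite mcoeffZ !mcoeffU.
by case: eqP; rewrite ?mulr1n ?mulr0n ?mulr1 ?mulr0.
Qed.

Lemma lext_eU (g : {malg CC[K]}) : lext (fun k => << 1 *g k >>) g = g.
Proof.
rewrite {2}(monalgE g) /lext; apply: eq_bigr => k _.
by rewrite eU_scale.
Qed.

Lemma lext_lin_islin (F : K -> V) : islin (lext F).
Proof. move=> a u v; exact: lext_lin. Qed.
End Gen2.

Definition inspan {K : choiceType} (P : K -> Prop) (g : {malg CC[K]}) :=
  forall k, k \in msupp g -> P k.

Section Span.
Context {K : choiceType} (P : K -> Prop).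
Lemma inspan0 : inspan P 0.
Proof. by move=> k; rewrite msupp0. Qed.
Lemma inspanD g h : inspan P g -> inspan P h -> inspan P (g + h).
Proof.
move=> hg hh k /(fsubsetP (msuppD_le _ _)); rewrite in_fsetU => /orP[].
  exact: hg. exact: hh.
Qed.
Lemma inspanZ a g : inspan P g -> inspan P (a *: g).
Proof. by move=> hg k /(fsubsetP (msuppZ_le _ _)); apply: hg. Qed.
Lemma inspanU k : P k -> inspan P << 1 *g k >>.
Proof. by move=> h k' /(fsubsetP msuppU_le); rewrite inE => /eqP ->. Qed.
Lemma inspan_lext {K' : choiceType} (F : K' -> {malg CC[K]}) g :
  (forall k, k \in msupp g -> inspan P (F k)) -> inspan P (lext F g).
Proof.
move=> h; rewrite /lext big_seq; apply: big_ind.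
- exact: inspan0.
- exact: inspanD.
- by move=> k kg; apply/inspanZ/h.
Qed.
End Span.

End GenM.
Import GenM.
Unset Implicit Arguments.
Set Strict Implicit.

Definition T1 (q : Bas) : Prop :=
  match q with None => True | Some (i, j, a, b) => i = 1%N /\ j = 1%N /\ a <= b end.
Definition validW (d : nat) (w : seq Bas) : Prop := all (validB d) w.
Definition validP (d : nat) (p : Bas) : Prop := validB d p.

Lemma lmulE x t : lmul x t = lext (fun p => lext (fun w => eW (p :: w)) t) x.
Proof.
rewrite /lmul /lext; apply: eq_bigr => p _; rewrite scaler_sumr.
by apply: eq_bigr => w _; rewrite scalerA.
Qed.

Lemma brrE r x y : brr r x y = lext (fun p => lext (fun q => rscale r (brA p q)) y) x.
Proof.
rewrite /brr /lext; apply: eq_bigr => p _; rewrite scaler_sumr.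
by apply: eq_bigr => w _; rewrite scalerA.
Qed.

Lemma lmul_linl t : islin (fun x => lmul x t).
Proof. by move=> a u v; rewrite (lmulE (a *: u + v)) (lmulE u) (lmulE v); apply: lext_lin. Qed.

Lemma lmul_linr x : islin (lmul x).
Proof.
move=> a u v; rewrite (lmulE x (a *: u + v)) (lmulE x u) (lmulE x v).
apply: (etrans _ (lext_pt (fun p => lext (fun w => eW (p :: w)) u) (fun p => lext (fun w => eW (p :: w)) v) a x)).
apply: eq_lext => p.
by rewrite lext_lin.
Qed.

Lemma lmulDr x u v : lmul x (u + v) = lmul x u + lmul x v.
Proof. exact: linD (lmul_linr x). Qed.
Lemma lmulZr x a u : lmul x (a *: u) = a *: lmul x u.
Proof. exact: linZ (lmul_linr x). Qed.
Lemma lmulBr x u v : lmul x (u - v) = lmul x u - lmul x v.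
Proof. by rewrite -scaleN1r lmulDr lmulZr scaleN1r. Qed.
Lemma lmul0r x : lmul x 0 = 0.
Proof. exact: lin0 (lmul_linr x). Qed.

Lemma brr_linl r y : islin (fun x => brr r x y).
Proof. by move=> a u v; rewrite (brrE r (a *: u + v)) (brrE r u) (brrE r v); apply: lext_lin. Qed.

Lemma brr_linr r x : islin (brr r x).
Proof.
move=> a u v; rewrite (brrE r x (a *: u + v)) (brrE r x u) (brrE r x v).
apply: (etrans _ (lext_pt (fun p => lext (fun q => rscale r (brA p q)) u) (fun p => lext (fun q => rscale r (brA p q)) v) a x)).
apply: eq_lext => p.
by rewrite lext_lin.
Qed.

Lemma lmul_UW p w : lmul (eB p) (eW w) = eW (p :: w).
Proof. by rewrite lmulE /eB lextU /eW lextU. Qed.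

Lemma lmul_W z w : lmul z (eW w) = ins [::] z w.
Proof.
rewrite lmulE; transitivity (lext (fun p => eW (p :: w)) z); last by [].
by apply: eq_lext => p; rewrite /eW lextU.
Qed.

Section N.
Variables (d : nat) (r : CC).

Lemma lext_N {K : choiceType} (F : K -> TT) g :
  (forall k, k \in msupp g -> inN d r (F k)) -> inN d r (lext F g).
Proof.
move=> h; rewrite /lext big_seq; apply: big_ind.
- exact: inN0.
- exact: inNadd.
- by move=> k kg; apply/inNscale/h.
Qed.

Lemma lin_N {K : choiceType} (f : {malg CC[K]} -> TT) g : islin f ->
  (forall k, k \in msupp g -> inN d r (f << 1 *g k >>)) -> inN d r (f g).
Proof.
move=> hf h; rewrite -(lext_eU g) lext_comm //; exact: lext_N.
Qed.

Lemma N_lmul y s : inspan (validP d) y -> inN d r s -> inN d r (lmul y s).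
Proof.
move=> hy; elim => {s}.
- by rewrite lin0; [exact: inN0 | exact: lmul_linr].
- by move=> s t _ hs _ ht; rewrite linD; [exact: inNadd | exact: lmul_linr].
- by move=> c t _ ht; rewrite linZ; [exact: inNscale | exact: lmul_linr].
- move=> u w x0 y0 hu hw hx hy0.
  apply: (lin_N (fun y => lmul y (eW (u ++ x0 :: y0 :: w) - eW (u ++ y0 :: x0 :: w) - ins u (brr r (eB x0) (eB y0)) w))); first exact: lmul_linl.
  move=> p /hy hp.
  rewrite -/(eB p) !lmulBr !lmul_UW.
  rewrite /ins lext_comm; last exact: lmul_linr.
  have -> : lext (fun k => lmul (eB p) (eW (u ++ k :: w))) (brr r (eB x0) (eB y0))
     = ins (p :: u) (brr r (eB x0) (eB y0)) w.
    by transitivity (lext (fun k => eW ((p :: u) ++ k :: w)) (brr r (eB x0) (eB y0))); [apply: eq_lext => k; rewrite lmul_UW | ].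
  have := @inNrel d r (p :: u) w x0 y0; rewrite /= hp hu; move=> H; apply: H => //.
- move=> u b hu hb.
  apply: (lin_N (fun y => lmul y (eW (rcons u b)))); first exact: lmul_linl.
  move=> p /hy hp; rewrite -/(eB p) lmul_UW.
  have := @inNplus d r (p :: u) b; rewrite /= hp hu; move=> H; exact: H.
- move=> u hu.
  apply: (lin_N (fun y => lmul y (eW (rcons u None) - eW u))); first exact: lmul_linl.
  move=> p /hy hp; rewrite -/(eB p) lmulBr !lmul_UW.
  have := @inNone d r (p :: u); rewrite /= hp hu; move=> H; exact: H.
Qed.
End N.

Lemma lin_sub3 {U W : lmodType CC} (f g h : U -> W) :
  islin f -> islin g -> islin h -> islin (fun x => f x - g x - h x).
Proof.
move=> hf hg hh; apply: (@lin_sub _ _ (fun x => f x - g x) h) => //.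
exact: lin_sub.
Qed.

Lemma comm_N d r x y t : inspan (validP d) x -> inspan (validP d) y ->
  inspan (validW d) t ->
  inN d r (lmul x (lmul y t) - lmul y (lmul x t) - lmul (brr r x y) t).
Proof.
move=> hx hy ht.
apply: (lin_N d r (fun x => lmul x (lmul y t) - lmul y (lmul x t) - lmul (brr r x y) t)).
  apply: lin_sub3; first exact: lmul_linl.
    exact: (@lin_comp _ _ _ (fun x => lmul x t) (lmul y) (lmul_linl t) (lmul_linr y)).
  exact: (@lin_comp _ _ _ (fun x => brr r x y) (fun z => lmul z t) (brr_linl r y) (lmul_linl t)).
move=> p /hx hp; rewrite -/(eB p).
apply: (lin_N d r (fun y => lmul (eB p) (lmul y t) - lmul y (lmul (eB p) t) - lmul (brr r (eB p) y) t)).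
  apply: lin_sub3.
  - exact: (@lin_comp _ _ _ (fun x => lmul x t) (lmul (eB p)) (lmul_linl t) (lmul_linr _)).
  - exact: lmul_linl.
  - exact: (@lin_comp _ _ _ (brr r (eB p)) (fun z => lmul z t) (brr_linr r _) (lmul_linl t)).
move=> q /hy hq; rewrite -/(eB q).
apply: (lin_N d r (fun t => lmul (eB p) (lmul (eB q) t) - lmul (eB q) (lmul (eB p) t) - lmul (brr r (eB p) (eB q)) t)).
  apply: lin_sub3.
  - exact: (@lin_comp _ _ _ (lmul (eB q)) (lmul (eB p)) (lmul_linr _) (lmul_linr _)).
  - exact: (@lin_comp _ _ _ (lmul (eB p)) (lmul (eB q)) (lmul_linr _) (lmul_linr _)).
  - exact: lmul_linr.
move=> w /ht hw; rewrite -/(eW w) !lmul_UW lmul_W.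
exact: (@inNrel d r [::] w p q isT hw hp hq).
Qed.

Lemma rscale_span r (S : Bas -> Prop) z : inspan S z -> S None -> inspan S (rscale r z).
Proof.
move=> hz hN; rewrite /rscale; apply: inspanD => //; apply: inspanZ.
exact: inspanU.
Qed.

Lemma rscale_span' r (S : Bas -> Prop) z : inspan S z -> ~ S None -> inspan S (rscale r z).
Proof.
move=> hz hN; rewrite /rscale mcoeff_outdom ?mulr0 ?scale0r ?addr0 //.
by apply/negP => /hz.
Qed.

Lemma vq11 m n : inspan T1 (vq 1 1 m n).
Proof.
rewrite /vq /=; case: (leP m n) => h.
  by apply: inspanU.
apply: inspanD; first by apply: inspanU; rewrite /=; split => //; split => //; exact: ltW.
by apply: inspanZ; apply: inspanU.
Qed.

Lemma brA11 r p q : T1 p -> T1 q -> inspan T1 (rscale r (brA p q)).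
Proof.
move=> hp hq; apply: rscale_span => //.
case: p hp => [[[[i j] a] b]|] hp; last exact: inspan0.
case: q hq => [[[[k l] c] e]|] hq; last exact: inspan0.
case: hp => -> [-> _]; case: hq => -> [-> _]; rewrite /brA.
apply: inspanD; [apply: inspanD; [apply: inspanD|]|]; apply: inspanZ; exact: vq11.
Qed.

Lemma L1_span r y : inL1 r y -> inspan T1 y.
Proof.
elim => {y}.
- by move=> m n h; apply: inspanU.
- exact: inspan0.
- by move=> x y _ hx _ hy; apply: inspanD.
- by move=> c x _ hx; apply: inspanZ.
- move=> x y _ hx _ hy; rewrite brrE; apply: inspan_lext => p /hx hp.
  by apply: inspan_lext => q /hy hq; apply: brA11.
Qed.

Lemma T1_valid d p : (1 <= d)%N -> T1 p -> validP d p.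
Proof.
move=> hd; case: p => [[[[i j] a] b]|] //= [-> [-> h]].
by rewrite /validP /= hd h.
Qed.

Lemma M1_valid d r t : (1 <= d)%N -> inM1 r t -> inspan (validW d) t.
Proof.
move=> hd; elim => {t}.
- by apply: inspanU.
- move=> x t hx _ ht; rewrite lmulE; apply: inspan_lext => p hp.
  apply: inspan_lext => w /ht hw; apply: inspanU.
  rewrite /validW /=; apply/andP; split; [exact: (T1_valid _ _ hd (L1_span _ _ hx _ hp)) | exact: hw].
- by move=> s t _ hs _ ht; apply: inspanD.
- by move=> c t _ ht; apply: inspanZ.
Qed.

Lemma inBplus_valid d p : inBplus d p -> validP d p.
Proof. by case: p => [[[[i j] a] b]|] //= /andP[]. Qed.

Lemma main_gen d r (S : Bas -> Prop) : (1 <= d)%N -> (forall p, S p -> inBplus d p) ->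
  (forall p q, S p -> T1 q -> inspan S (rscale r (brA p q))) ->
  forall t, inM1 r t -> forall x, inspan S x -> inN d r (lmul x t).
Proof.
move=> hd hS hB t; elim => {t}.
- move=> x hx; rewrite lmulE.
  apply: lext_N => p hp; rewrite /eW lextU.
  exact: (@inNplus d r [::] p isT (hS p (hx p hp))).
- move=> y t hy ht IH x hx.
  have hSv : inspan (validP d) x := fun p hp => inBplus_valid d p (hS p (hx p hp)).
  have hyv : inspan (validP d) y := fun p hp => T1_valid d p hd (L1_span r y hy p hp).
  have htv := M1_valid d r t hd ht.
  have := comm_N d r x y t hSv hyv htv.
  set D := (_ - _ - _) => hD.
  have -> : lmul x (lmul y t) = D + lmul y (lmul x t) + lmul (brr r x y) t
    by rewrite /D addrAC !subrK.
  apply: inNadd; [apply: inNadd | ] => //.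
    exact: N_lmul hyv (IH x hx).
  apply: IH; rewrite brrE; apply: inspan_lext => p hp.
  apply: inspan_lext => q hq; apply: hB; [exact: hx | exact: (L1_span r y hy)].
- by move=> s t _ hs _ ht x hx; rewrite lmulDr; apply: inNadd; [apply: hs | apply: ht].
- by move=> c t _ ht x hx; rewrite lmulZr; apply: inNscale; apply: ht.
Qed.

Lemma inspan_dF (S : Bas -> Prop) k (v : LL) : inspan S (delta false k *: v).
Proof. rewrite /delta scale0r; exact: inspan0. Qed.

Theorem lemma4p6 (d : nat) (r : CC) : (2 <= d)%N ->
  (forall (j : nat) (m n : int), (2 <= j <= d)%N -> 0 <= n ->
     forall t : TT, inM1 r t -> zeroM d r (lmul (vq 1 j m n) t)) /\
  (forall (i j : nat) (m n : int), (2 <= i)%N -> (i <= j)%N -> (j <= d)%N ->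
     inBplus d (Some (i, j, m, n)) ->
     forall t : TT, inM1 r t -> zeroM d r (lmul (vq i j m n) t)).
Proof.
move=> hd; have hd1 : (1 <= d)%N by apply: ltnW.
split.
- move=> j m n /andP[hj hjd] hn t ht.
  have hj1 : (j == 1)%N = false by apply/negbTE; rewrite neq_ltn hj orbT.
  have hjl : (j < 1)%N = false by rewrite ltnNge (ltnW hj).
  have -> : vq 1 j m n = eB (Some (1%N, j, m, n)) by rewrite /vq hj.
  apply: (main_gen d r (fun p => exists k, p = Some (1%N, j, k, n))) => //.
  + by move=> p [k ->]; rewrite /= hj hjd hn orbT (ltnW hj).
  + move=> p q [k ->] hq; apply: rscale_span'; last by case.
    case: q hq => [[[[k' l] c] e]|] hq; last exact: inspan0.
    case: hq => -> [-> _].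
    rewrite /brA; apply: inspanD; [apply: inspanD; [apply: inspanD|]|].
    * rewrite hj1 andFb; exact: inspan_dF.
    * apply: inspanZ; rewrite /vq hjl hj; apply: inspanU; by eexists.
    * rewrite hj1 andFb; exact: inspan_dF.
    * apply: inspanZ; rewrite /vq hj; apply: inspanU; by eexists.
  + by apply: inspanU; exists m.
- move=> i j m n hi hij hjd hB t ht.
  have hi1 : (i == 1)%N = false by apply/negbTE; rewrite neq_ltn hi orbT.
  have hj1 : (j == 1)%N = false by apply/negbTE; rewrite neq_ltn (leq_trans hi hij) orbT.
  have -> : vq i j m n = eB (Some (i, j, m, n)).
    rewrite /vq; case: (ltnP i j) => h //.
    have eij : i = j by apply/eqP; rewrite eqn_leq hij h.
    subst i; rewrite ltnn.
    move: hB => /andP[/and4P[_ _ _ hmn] _]; rewrite ltnn /= in hmn.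
    by rewrite hmn.
  apply: (main_gen d r (fun p => p = Some (i, j, m, n))) => //.
  + by move=> p ->.
  + move=> p q -> hq; apply: rscale_span'; last by [].
    case: q hq => [[[[k' l] c] e]|] hq; last exact: inspan0.
    case: hq => -> [-> _].
    rewrite /brA; apply: inspanD; [apply: inspanD; [apply: inspanD|]|].
    * rewrite hj1 andFb; exact: inspan_dF.
    * rewrite hi1 andFb; exact: inspan_dF.
    * rewrite hj1 andFb; exact: inspan_dF.
    * rewrite hi1 andFb; exact: inspan_dF.
  + by apply: inspanU.
Qed.
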